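(* Let $G$ be a finite group, $p$ a prime, and $S$ a Sylow $p$-subgroup of $G$. Then $W_G(S)$ is a subgroup of $Z(S)$.
   Context: An element $x \in S$ is weakly closed in $S$ with respect to $G$ if $x^g = x$ whenever $g \in G$ and $x^g := g^{-1}xg \in S$. $W_G(S)$ denotes the set of all elements of $S$ that are weakly closed in $S$ with respect to $G$. *)

(* Defs.v *)
From mathcomp Require Import all_boot all_fingroup all_solvable.
Set Implicit Arguments.
Unset Strict Implicit.
Unset Printing Implicit Defensive.
Local Open Scope group_scope.

Definition weakly_closed_in {gT : finGroupType} (G S : {set gT}) (x : gT) : bool :=
  (x \in S) && [forall g in G, (x ^ g \in S) ==> (x ^ g == x)].

Definition W_set {gT : finGroupType} (G S : {set gT}) : {set gT} :=
  [set x | weakly_closed_in G S x].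

(* Main.v *)
Require Import Defs.
From mathcomp Require Import all_boot all_fingroup all_solvable.
Local Open Scope group_scope.

Lemma W_fix (gT : finGroupType) (G S : {group gT}) x d :
  x \in W_set G S -> d \in G -> x \in S :^ d -> x ^ d = x.
Proof.
rewrite inE /weakly_closed_in => /andP[xS /forall_inP H] dG.
rewrite mem_conjg => xdS.
have := H _ (groupVr dG); rewrite xdS /= => /eqP e.
by rewrite -{1}e conjgKV.
Qed.
Arguments W_fix {gT G S x d}.

Lemma W_center (gT : finGroupType) (G S : {group gT}) :
  S \subset G -> W_set G S \subset 'Z(S).
Proof.
move=> sSG; apply/subsetP => x xW.
have xS : x \in S by move: xW; rewrite inE => /andP[].
apply/centerP; split=> // s sS.
apply/commgP; rewrite -conjg_fix; apply/eqP.
apply: (W_fix xW (subsetP sSG s sS)).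
by rewrite mem_conjg groupJ ?groupV.
Qed.
Arguments W_center {gT G S}.

Lemma commJ (gT : finGroupType) (a b g : gT) :
  commute a b -> commute (a ^ g) (b ^ g).
Proof. by move=> H; rewrite /commute -!conjMg H. Qed.

Theorem mainTheorem3 (gT : finGroupType) (G S : {group gT}) (p : nat) :
  prime p -> S \in 'Syl_p(G) ->
  group_set (W_set G S) && (W_set G S \subset 'Z(S)).
Proof.
move=> _; rewrite inE => sylS.
have sSG := pHall_sub sylS.
have WZ := W_center sSG.
rewrite WZ andbT; apply/group_setP; split.
  rewrite inE /weakly_closed_in group1 /=; apply/forall_inP => g _.
  by rewrite conj1g eqxx implybT.
move=> x y xW yW.
have xZ := subsetP WZ x xW; have yZ := subsetP WZ y yW.
move: (xZ) (yZ) => /centerP[xS cxS] /centerP[yS cyS].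
rewrite inE /weakly_closed_in groupM //=; apply/forall_inP => g gG.
apply/implyP => tS; set t := (x * y) ^ g in tS *.
have sRC : S :^ g \subset 'C_G[t].
  apply/subsetP => r rR; apply/subcent1P; split.
    by move: rR; rewrite mem_conjg => /(subsetP sSG); rewrite groupJr ?groupV.
  move: rR; rewrite mem_conjg => rS.
  apply/commute_sym; rewrite /t conjMg.
  have e1 : commute (x ^ g) r.
    by rewrite -(conjgKV g r); apply: commJ; exact: cxS.
  have e2 : commute (y ^ g) r.
    by rewrite -(conjgKV g r); apply: commJ; exact: cyS.
  by apply: commuteM.
have sylR : p.-Sylow(G) (S :^ g)%G by rewrite /= pHallJ.
have sylRC : p.-Sylow('C_G[t]) (S :^ g)%G.
  by apply: pHall_subl sylR => //; apply: subsetIl.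
have sDC : 'C_S[t] \subset 'C_G[t] by apply: setSI.
have pD : p.-group 'C_S[t] by apply: pgroupS (pHall_pgroup sylS); apply: subsetIl.
have [P sylP sDP] := Sylow_superset sDC pD.
have [c cC defP] := Sylow_trans sylRC sylP.
have cG : c \in G by move: cC; rewrite inE => /andP[].
have ct : t ^ c = t.
  case/subcent1P: cC => _ tc; apply/conjg_fixP/commgP; exact: tc.
have inP z : z \in S -> commute z t -> z \in S :^ (g * c).
  move=> zS zt; have -> : S :^ (g * c) = gval P by rewrite defP conjsgM.
  by apply: (subsetP sDP); apply/subcent1P; split => //; apply/commute_sym.
have xt : commute x t by exact: cxS.
have yt : commute y t by exact: cyS.
have ex := W_fix xW (groupM gG cG) (inP x xS xt).
have ey := W_fix yW (groupM gG cG) (inP y yS yt).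
by apply/eqP; rewrite -ct /t -conjgM conjMg ex ey.
Qed.
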